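(* Let $M\ge 2$ and define $$\mathcal{B}=\Big\{(n_1,\dots,n_M,P_1,\dots,P_M)\in\mathbb{R}_{>0}^{2M}\;:\;0.5>\varepsilon_1(n_1,P_1)>\varepsilon_M(n_1,\dots,n_M,P_1,\dots,P_M)>Q\big(\sqrt{2B\ln 2}/3\big)\Big\}.$$ Fix $(n_1,\dots,n_M,P_1,\dots,P_M)\in\mathbb{R}_{>0}^{2M}$. Then on any interval of values $a>0$ for which $(an_1,n_2,\dots,n_M,P_1/a,P_2,\dots,P_M)\in\mathcal{B}$, both functions $a\mapsto\varepsilon_1(an_1,P_1/a)$ and $a\mapsto\varepsilon_M(an_1,n_2,\dots,n_M,P_1/a,P_2,\dots,P_M)$ are non-increasing in $a$.
   Context: Fix $B>0$. Let $Q(x)=\frac{1}{\sqrt{2\pi}}\int_x^\infty e^{-t^2/2}\,dt$. For $m\ge 1$, blocklengths $\vec n_m=(n_1,\dots,n_m)$ with $n_i>0$ and powers $\vec P_m=(P_1,\dots,P_m)$ with $P_i\ge 0$ (not all zero), define $$\varepsilon_m(\vec n_m,\vec P_m)=Q\!\left(\frac{\sum_{i=1}^m n_i\ln(1+P_i)-B\ln 2}{\sqrt{\sum_{i=1}^m \frac{n_iP_i(P_i+2)}{(P_i+1)^2}}}\right),$$ written also as $\varepsilon_m(n_1,\dots,n_m,P_1,\dots,P_m)$. *)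

(* Defs.v *)
From Stdlib Require Import Reals Lra ClassicalEpsilon.
Open Scope R_scope.

Definition gauss (t : R) : R := / sqrt (2 * PI) * exp (- (t ^ 2) / 2).

Definition is_tail_int (f : R -> R) (x l : R) : Prop :=
  forall eps, 0 < eps -> exists Y, forall y, Y <= y ->
    exists pr : Riemann_integrable f x y, Rabs (RiemannInt pr - l) < eps.

(* Q(x) = (1/sqrt(2 pi)) int_x^oo exp(-t^2/2) dt  (the limit exists and is unique). *)
Definition Qfun (x : R) : R := epsilon (inhabits 0) (is_tail_int gauss x).

Fixpoint sumR (m : nat) (f : nat -> R) : R :=
  match m with
  | O => 0
  | S k => sumR k f + f k
  end.

(* eps_m(n_1..n_m, P_1..P_m), with n_i = n (i-1), P_i = P (i-1). *)
Definition epsm (B : R) (m : nat) (n P : nat -> R) : R :=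
  Qfun ((sumR m (fun i => n i * ln (1 + P i)) - B * ln 2) /
        sqrt (sumR m (fun i => n i * P i * (P i + 2) / (P i + 1) ^ 2))).

Definition inBset (B : R) (M : nat) (n P : nat -> R) : Prop :=
  (forall i, (i < M)%nat -> 0 < n i /\ 0 < P i) /\
  0.5 > epsm B 1 n P /\
  epsm B 1 n P > epsm B M n P /\
  epsm B M n P > Qfun (sqrt (2 * B * ln 2) / 3).

Definition scaleN (a : R) (n : nat -> R) : nat -> R :=
  fun i => if Nat.eqb i 0 then a * n i else n i.
Definition scaleP (a : R) (P : nat -> R) : nat -> R :=
  fun i => if Nat.eqb i 0 then P i / a else P i.

(* Main.v *)
Require Import Defs.
From Stdlib Require Import Reals Lra Lia ClassicalEpsilon.
From HB Require Import structures.
From mathcomp Require all_boot all_order all_algebra all_classical all_reals all_analysis Rstruct Rstruct_topology.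
From Coquelicot Require Coquelicot.
Open Scope R_scope.

Module MC.
Import all_boot all_order all_algebra.
Import all_classical all_reals all_analysis.
Import Rstruct Rstruct_topology.
Import Order.TTheory GRing.Theory Num.Theory.
Import numFieldNormedType.Exports.
Local Open Scope classical_set_scope.
Local Open Scope ring_scope.

Lemma bridge_deriv (f : R^o -> R^o) (x : R) : derivable f x 1 -> derivable_pt_lim f x (derive1 f x).
Proof.
move=> df.
rewrite derive1E.
move/cvg_ex: df => [l Hl].
have -> : 'D_1 f x = l by apply: cvg_lim.
move=> eps /RltP eps0.
move/cvgrPdist_lt : Hl => /(_ eps eps0).
rewrite /dnbhs /within /= => /nbhs_ballP [d /= d0 Hd].
exists (mkposreal d ltac:(apply/RltP; exact d0)) => h /eqP h0 /RltP hd.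
apply/RltP.
have hb : ball (0 : R^o) d h.
  rewrite /ball /= sub0r normrN -RabsE.
  exact: hd.
have := Hd h hb h0.
move=> H; apply/RltP; rewrite RabsE; move: H.
rewrite /GRing.scale /= mulr1 (addrC h x) distrC mulrC.
by move/RltP.
Qed.

Definition mpi : R := pi.
Definition matan (x : R) : R := atan x.

Definition G (z : R) : R := gauss_integral_proof.integral0_gauss z.

Lemma G_lim : forall eps : R, (0 < eps)%coqR -> exists Z : R, forall z, (Z <= z)%coqR ->
   (Rabs (G z - sqrt mpi / 2) < eps)%coqR.
Proof.
have cvg_Ig : @gauss_integral_proof.integral0_gauss R x @[x --> +oo] --> Num.sqrt pi / 2.
  have : Num.sqrt (@gauss_integral_proof.integral0_gauss R x ^+ 2) @[x --> +oo]
      --> Num.sqrt (pi / 4).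
    apply: continuous_cvg => //;
      [exact: sqrt_continuous|exact: gauss_integral_proof.cvg_integral0_gauss_sqr].
  rewrite sqrtrM ?pi_ge0// sqrtrV// (_ : 4 = 2 ^+ 2); last first.
    by rewrite expr2 -natrM.
  rewrite sqrtr_sqr ger0_norm//.
  rewrite (_ : (fun _ => Num.sqrt _) = gauss_integral_proof.integral0_gauss)//.
  apply/funext => r; rewrite sqrtr_sqr// ger0_norm//.
  exact: gauss_integral_proof.integral0_gauss_ge0.
rewrite /mpi RsqrtE.
move=> eps /RltP eps0.
move/cvgrPdist_lt : cvg_Ig => /(_ eps eps0) [M [Mr HM]].
exists (M + 1)%coqR => z /RleP zM.
apply/RltP; rewrite RabsE distrC; apply: HM.
by apply: lt_le_trans zM; rewrite ltrDl.
Qed.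


Lemma G0 : (G 0 = 0)%coqR.
Proof. by rewrite /G /gauss_integral_proof.integral0_gauss set_itv1 Rintegral_set1. Qed.

Lemma G_cont0 : forall eps : R, (0 < eps)%coqR -> exists d : R, ((0 < d)%coqR /\ forall z, (Rabs z < d)%coqR -> (Rabs (G z) < eps)%coqR)%type.
Proof.
have H : (G : R^o -> R^o) x @[x --> (0:R^o)] --> (0:R^o).
  apply: (@parameterized_integral_cvg_left R 0 1 gauss_fun) => //.
  apply: continuous_compact_integrable => //; first exact: segment_compact.
  by apply: continuous_subspaceT; exact: continuous_gauss_fun.
move=> eps /RltP eps0.
move/cvgrPdist_lt : H => /(_ eps eps0) /nbhs_ballP [d /= d0 Hd].
exists d; split; first by apply/RltP.
move=> z /RltP zd; apply/RltP.
have := Hd z; rewrite /ball /= sub0r normrN -RabsE => /(_ zd).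
by rewrite sub0r normrN RabsE.
Qed.

Lemma G_deriv : forall z : R, (0 < z)%coqR -> derivable_pt_lim G z (exp (- (z * z))).
Proof.
move=> z /RltP z0.
have [dG Gp] : (derivable (G : R^o -> R^o) z 1 /\ derive1 (G : R^o -> R^o) z = gauss_fun z)%type.
  apply: (@continuous_FTC1_closed R gauss_fun 0 z (z + 1)).
  - by rewrite ltrDl.
  - apply: continuous_compact_integrable => //; first exact: segment_compact.
    by apply: continuous_subspaceT; exact: continuous_gauss_fun.
  - exact: z0.
  - exact: continuous_gauss_fun.
have := @bridge_deriv G z dG.
by rewrite Gp /gauss_fun RexpE expr2.
Qed.

Lemma matan_deriv x : derivable_pt_lim matan x (/ (1 + x^2))%coqR.
Proof.
have dA : derivable (atan : R^o -> R^o) x 1 by exact: derivable_atan.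
have := @bridge_deriv (atan : R^o -> R^o) x dA.
by rewrite derive1_atan RinvE RpowE.
Qed.

Lemma matan0 : (matan 0 = 0)%coqR.
Proof. exact: atan0. Qed.

Lemma matan1 : matan 1 = (mpi / 4)%coqR.
Proof. by rewrite /matan atan1 /mpi RdivE IZRposE INRE. Qed.

End MC.



Lemma PI_pi : PI = MC.mpi.
Proof.
  set (h := fun x => atan x - MC.matan x).
  assert (Hd : forall c, 0 <= c <= 1 -> derivable_pt_lim h c ((fun _ => 0) c)).
  { intros c _. unfold h.
    replace 0 with (/ (1 + c^2) - / (1 + c^2)) by ring.
    apply derivable_pt_lim_minus; [apply derivable_pt_lim_atan | apply MC.matan_deriv]. }
  destruct (MVT_cor2 h (fun _ => 0) 0 1 Rlt_0_1 Hd) as [c [Hc _]].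
  unfold h in Hc. cbv beta in Hc. rewrite atan_0, MC.matan0, atan_1, MC.matan1 in Hc. lra.
Qed.

Lemma gauss_cont : forall t, continuity_pt gauss t.
Proof.
  intro t. unfold gauss. apply continuity_pt_mult.
  - apply continuity_pt_const. intros x y; reflexivity.
  - apply (continuity_pt_comp (fun t => - t^2/2) exp).
    + reg.
    + apply derivable_continuous_pt, derivable_pt_exp.
Qed.

Lemma ri : forall a b, Riemann_integrable gauss a b.
Proof.
  intros a b. destruct (Rle_dec a b) as [H|H].
  - apply continuity_implies_RiemannInt; auto. intros; apply gauss_cont.
  - apply RiemannInt_P1. apply continuity_implies_RiemannInt; [lra|]. intros; apply gauss_cont.
Qed.

Definition Phi (y : R) : R := RiemannInt (ri 0 y).

Lemma chasles : forall x y (pr : Riemann_integrable gauss x y), RiemannInt pr = Phi y - Phi x.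
Proof.
  intros x y pr. unfold Phi. rewrite <- (RiemannInt_P26 (ri 0 x) pr (ri 0 y)). ring.
Qed.

Lemma gauss_pos : forall t, 0 < gauss t.
Proof.
  intro t. unfold gauss. apply Rmult_lt_0_compat.
  - apply Rinv_0_lt_compat, sqrt_lt_R0. generalize PI_RGT_0; lra.
  - apply exp_pos.
Qed.

Lemma exp_le1 : forall x, x <= 0 -> exp x <= 1.
Proof.
  intros x Hx. rewrite <- exp_0. destruct Hx as [Hx|Hx].
  - left; apply exp_increasing; exact Hx.
  - rewrite Hx; right; reflexivity.
Qed.

Lemma gauss_le1 : forall t, gauss t <= 1.
Proof.
  intro t. unfold gauss.
  assert (H1 : 1 < sqrt (2 * PI)).
  { rewrite <- sqrt_1. apply sqrt_lt_1; generalize PI_RGT_0 PI2_1; intros; lra. }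
  assert (H2 : exp (- t ^ 2 / 2) <= 1).
  { apply exp_le1. assert (0 <= t^2) by (simpl; nra). lra. }
  assert (H3 : / sqrt (2 * PI) < 1).
  { rewrite <- Rinv_1. apply Rinv_lt_contravar; lra. }
  assert (0 < exp (- t ^ 2 / 2)) by apply exp_pos.
  assert (0 < / sqrt (2 * PI)) by (apply Rinv_0_lt_compat; lra).
  nra.
Qed.

Lemma Phi0 : Phi 0 = 0.
Proof. unfold Phi. apply RiemannInt_P9. Qed.

Lemma Phi_mono : forall x y, x <= y -> Phi x <= Phi y.
Proof.
  intros x y Hxy. assert (H := chasles x y (ri x y)).
  assert (H0 : 0 * (y - x) <= RiemannInt (ri x y)).
  { apply (@RiemannInt_const_bound gauss x y 0 1 (ri x y) Hxy).
    intros t _; split; [left; apply gauss_pos | apply gauss_le1]. }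
  lra.
Qed.

Lemma Phi_small : forall e, 0 <= e -> Rabs (Phi e) <= e.
Proof.
  intros e He. assert (H := chasles 0 e (ri 0 e)). rewrite Phi0 in H.
  assert (H0 := @RiemannInt_const_bound gauss 0 e 0 1 (ri 0 e) He
    (fun t _ => conj (Rlt_le _ _ (gauss_pos t)) (gauss_le1 t))).
  unfold Phi in *. rewrite Rabs_right; lra.
Qed.

Lemma FTC_gen : forall f g a b (pr : Riemann_integrable f a b), a <= b ->
  (forall x, a <= x <= b -> continuity_pt f x) ->
  (forall x, a <= x <= b -> derivable_pt_lim g x (f x)) ->
  RiemannInt pr = g b - g a.
Proof.
  intros f g a b pr H C0 Hg.
  rewrite (RiemannInt_P20 H (FTC_P1 H C0) pr).
  assert (H1 := RiemannInt_P29 H C0).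
  assert (H2 : antiderivative f g a b).
  { split; [|exact H]. intros x Hx.
    assert (pr' : derivable_pt g x) by (exists (f x); apply Hg; exact Hx).
    exists pr'. symmetry. apply derive_pt_eq_0. apply Hg; exact Hx. }
  destruct (antiderivative_Ucte f _ _ _ _ H1 H2) as [C H3].
  rewrite (H3 b), (H3 a); [ring | split; [lra|exact H] | split; [exact H|lra]].
Qed.

Definition K (y : R) : R := / sqrt PI * MC.G (y / sqrt 2).

Lemma sqrt2_pos : 0 < sqrt 2.
Proof. apply sqrt_lt_R0; lra. Qed.

Lemma sqrtPI_pos : 0 < sqrt PI.
Proof. apply sqrt_lt_R0, PI_RGT_0. Qed.

Lemma K_deriv : forall y, 0 < y -> derivable_pt_lim K y (gauss y).
Proof.
  intros y Hy. unfold K, gauss.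
  assert (Hs2 := sqrt2_pos). assert (Hsp := sqrtPI_pos).
  assert (Hc : derivable_pt_lim (fun y => y / sqrt 2) y (/ sqrt 2)).
  { replace (/ sqrt 2) with (1 * (fun _ => / sqrt 2) y + id y * 0) by (cbv beta; ring).
    apply (derivable_pt_lim_mult id (fun _ => / sqrt 2));
      [apply derivable_pt_lim_id | apply derivable_pt_lim_const]. }
  assert (HG := MC.G_deriv (y / sqrt 2) ltac:(apply Rdiv_lt_0_compat; lra)).
  assert (HGc := derivable_pt_lim_comp (fun y => y / sqrt 2) MC.G y _ _ Hc HG).
  assert (HK := derivable_pt_lim_scal _ (/ sqrt PI) y _ HGc).
  replace (/ sqrt (2 * PI) * exp (- y ^ 2 / 2)) with
    (/ sqrt PI * (exp (- (y / sqrt 2 * (y / sqrt 2))) * / sqrt 2)).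
  - exact HK.
  - rewrite sqrt_mult by (generalize PI_RGT_0; lra).
    replace (- (y / sqrt 2 * (y / sqrt 2))) with (- y ^ 2 / 2).
    + field; lra.
    + replace (y / sqrt 2 * (y / sqrt 2)) with (y * y / (sqrt 2 * sqrt 2)) by (field; lra).
      rewrite sqrt_sqrt by lra. field.
Qed.

Lemma small_zero : forall x, (forall eta, 0 < eta -> Rabs x < eta) -> x = 0.
Proof.
  intros x H. destruct (Req_dec x 0) as [|Hx]; [assumption|].
  assert (Hp : 0 < Rabs x) by (apply Rabs_pos_lt; exact Hx).
  specialize (H _ Hp). lra.
Qed.

Lemma Phi_K : forall y, 0 < y -> Phi y = K y.
Proof.
  intros y Hy.
  assert (Heq : forall e, 0 < e <= y -> Phi y - K y = Phi e - K e).
  { intros e He. assert (H1 := chasles e y (ri e y)).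
    assert (H2 : RiemannInt (ri e y) = K y - K e).
    { apply FTC_gen; [lra | intros; apply gauss_cont | intros x Hx; apply K_deriv; lra]. }
    lra. }
  apply Rminus_diag_uniq. apply small_zero. intros eta Heta.
  assert (Hsp := sqrtPI_pos). assert (Hs2 := sqrt2_pos).
  destruct (MC.G_cont0 (eta / 2 * sqrt PI)) as [d [Hd HG]].
  { apply Rmult_lt_0_compat; lra. }
  set (e := Rmin (Rmin y (eta / 2)) (d / 2)).
  assert (He0 : 0 < e).
  { unfold e. repeat apply Rmin_pos; lra. }
  assert (Hey : e <= y) by (unfold e; eapply Rle_trans; [apply Rmin_l | apply Rmin_l]).
  assert (Heeta : e <= eta / 2) by (unfold e; eapply Rle_trans; [apply Rmin_l | apply Rmin_r]).
  assert (Hed : e <= d / 2) by (unfold e; apply Rmin_r).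
  rewrite (Heq e (conj He0 Hey)).
  assert (HP := Phi_small e (Rlt_le _ _ He0)).
  assert (HGe : Rabs (MC.G (e / sqrt 2)) < eta / 2 * sqrt PI).
  { apply HG. rewrite Rabs_right.
    - assert (e / sqrt 2 <= e).
      { unfold Rdiv. assert (1 <= sqrt 2).
        { rewrite <- sqrt_1. apply sqrt_le_1; lra. }
        assert (/ sqrt 2 <= 1) by (rewrite <- Rinv_1; apply Rinv_le_contravar; lra).
        nra. }
      lra.
    - apply Rle_ge. apply Rlt_le, Rdiv_lt_0_compat; lra. }
  assert (HKe : Rabs (K e) < eta / 2).
  { unfold K. rewrite Rabs_mult, Rabs_inv, (Rabs_right (sqrt PI)) by lra.
    apply (Rmult_lt_reg_l (sqrt PI)); [lra|].
    rewrite <- Rmult_assoc, Rinv_r by lra. lra. }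
  unfold Rminus. eapply Rle_lt_trans; [apply Rabs_triang|]. rewrite Rabs_Ropp. lra.
Qed.

Lemma Phi_lim : forall eps, 0 < eps -> exists Y, forall y, Y <= y -> Rabs (Phi y - 1/2) < eps.
Proof.
  intros eps Heps. assert (Hsp := sqrtPI_pos). assert (Hs2 := sqrt2_pos).
  destruct (MC.G_lim (eps * sqrt PI)) as [Z HZ]; [apply Rmult_lt_0_compat; lra|].
  exists (Rmax 1 (Z * sqrt 2)). intros y Hy.
  assert (Hy1 : 1 <= y) by (eapply Rle_trans; [apply Rmax_l|exact Hy]).
  assert (HyZ : Z * sqrt 2 <= y) by (eapply Rle_trans; [apply Rmax_r|exact Hy]).
  rewrite Phi_K by lra. unfold K.
  assert (H := HZ (y / sqrt 2) ltac:(apply (Rmult_le_reg_r (sqrt 2)); [lra|]; unfold Rdiv; rewrite Rmult_assoc, Rinv_l by lra; lra)).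
  rewrite <- PI_pi in H.
  replace (/ sqrt PI * MC.G (y / sqrt 2) - 1 / 2) with (/ sqrt PI * (MC.G (y / sqrt 2) - sqrt PI / 2)) by (field; lra).
  rewrite Rabs_mult, Rabs_inv, (Rabs_right (sqrt PI)) by lra.
  apply (Rmult_lt_reg_l (sqrt PI)); [lra|].
  rewrite <- Rmult_assoc, Rinv_r by lra. lra.
Qed.

Lemma tail_unique : forall x l1 l2, is_tail_int gauss x l1 -> is_tail_int gauss x l2 -> l1 = l2.
Proof.
  intros x l1 l2 H1 H2. apply Rminus_diag_uniq, small_zero. intros eta Heta.
  destruct (H1 (eta/2) ltac:(lra)) as [Y1 HY1]. destruct (H2 (eta/2) ltac:(lra)) as [Y2 HY2].
  destruct (HY1 (Rmax Y1 Y2) (Rmax_l _ _)) as [p1 Hp1].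
  destruct (HY2 (Rmax Y1 Y2) (Rmax_r _ _)) as [p2 Hp2].
  rewrite (RiemannInt_P5 p1 p2) in Hp1.
  replace (l1 - l2) with (- (RiemannInt p2 - l1) + (RiemannInt p2 - l2)) by ring.
  eapply Rle_lt_trans; [apply Rabs_triang|]. rewrite Rabs_Ropp. lra.
Qed.

Lemma Qfun_eq : forall x, Qfun x = 1/2 - Phi x.
Proof.
  intro x.
  assert (H : is_tail_int gauss x (1/2 - Phi x)).
  { intros eps Heps. destruct (Phi_lim eps Heps) as [Y HY]. exists Y. intros y Hy.
    exists (ri x y). rewrite chasles.
    replace (Phi y - Phi x - (1 / 2 - Phi x)) with (Phi y - 1/2) by ring. apply HY; exact Hy. }
  unfold Qfun. apply (tail_unique x).
  - apply epsilon_spec. exists (1/2 - Phi x). exact H.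
  - exact H.
Qed.

Lemma Q0 : Qfun 0 = 1/2.
Proof. rewrite Qfun_eq, Phi0. ring. Qed.

Lemma Q_mono : forall x y, x <= y -> Qfun y <= Qfun x.
Proof. intros x y H. rewrite !Qfun_eq. assert (H0 := Phi_mono x y H). lra. Qed.



Module CQ.
Import Coquelicot.Coquelicot.

Definition Vm (W n0 p a : R) : R := W + a * n0 * (p / a) * (p / a + 2) / (p / a + 1) ^ 2.

Definition Fm (A W c n0 p a : R) : R :=
  (A + a * n0 * ln (1 + p / a) - c) / sqrt (W + a * n0 * (p / a) * (p / a + 2) / (p / a + 1) ^ 2).

Definition dFm (A W c n0 p a : R) : R :=
  (n0 * (ln (1 + p / a) - p / (a + p)) * Vm W n0 p a
   - (A + a * n0 * ln (1 + p / a) - c) * (n0 * p ^ 2 * (p + 3 * a) / (p + a) ^ 3) / 2)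
  / (Vm W n0 p a * sqrt (Vm W n0 p a)).

Lemma Vm_pos W n0 p a : 0 <= W -> 0 < n0 -> 0 < p -> 0 < a -> 0 < Vm W n0 p a.
Proof.
  intros. unfold Vm.
  assert (0 < p / a) by (apply Rdiv_lt_0_compat; lra).
  assert (0 < a * n0 * (p / a) * (p / a + 2) / (p / a + 1) ^ 2).
  { apply Rdiv_lt_0_compat; [|apply pow_lt; lra].
    assert (0 < a * n0) by nra. assert (0 < a * n0 * (p / a)) by nra. nra. }
  lra.
Qed.

Lemma Fm_deriv A W c n0 p a : 0 <= W -> 0 < n0 -> 0 < p -> 0 < a ->
  is_derive (Fm A W c n0 p) a (dFm A W c n0 p a).
Proof.
  intros HW Hn Hp Ha. unfold Fm, dFm.
  assert (HV := Vm_pos W n0 p a HW Hn Hp Ha).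
  assert (Hpa : 0 < p / a) by (apply Rdiv_lt_0_compat; lra).
  assert (Hpa' : 0 < p * / a) by exact Hpa.
  assert (HV' : 0 < W + a * n0 * (p * / a) * (p * / a + 2) * / ((p * / a + 1) * ((p * / a + 1) * 1))).
  { unfold Vm, Rdiv in HV; simpl in HV; exact HV. }
  auto_derive.
  - repeat split; try lra.
    + apply Rgt_not_eq. nra.
    + apply Rgt_not_eq, sqrt_lt_R0; exact HV'.
  - unfold Vm, Rdiv. simpl.
    set (E := W + a * n0 * (p * / a) * (p * / a + 2) * / ((p * / a + 1) * ((p * / a + 1) * 1))) in *.
    assert (Hs : 0 < sqrt E) by (apply sqrt_lt_R0; exact HV').
    assert (Hss : sqrt E * sqrt E = E) by (apply sqrt_sqrt; lra).
    set (s := sqrt E) in *.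
    rewrite <- Hss.
    unfold E in Hss.
    field. repeat split; try lra.
Qed.

Lemma ln_lb : forall x, 0 <= x -> 2 * x / (2 + x) <= ln (1 + x).
Proof.
  intros x Hx. destruct Hx as [Hx|Hx]; [|subst; rewrite !Rplus_0_r, ln_1; unfold Rdiv; lra].
  set (phi := fun t => ln (1 + t) - 2 * t / (2 + t)).
  assert (Hd : forall c, 0 <= c <= x -> derivable_pt_lim phi c ((fun t => / (1 + t) - 4 / (2 + t) ^ 2) c)).
  { intros c Hc. apply is_derive_Reals. unfold phi. auto_derive.
    - lra.
    - field. lra. }
  destruct (MVT_cor2 phi _ 0 x Hx Hd) as [c [Hc Hc2]].
  unfold phi in Hc. cbv beta in Hc. rewrite Rplus_0_r, ln_1 in Hc.
  assert (Hder : 0 <= / (1 + c) - 4 / (2 + c) ^ 2).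
  { replace (/ (1 + c) - 4 / (2 + c) ^ 2) with (c ^ 2 / ((1 + c) * (2 + c) ^ 2)) by (field; lra).
    apply Rdiv_le_0_compat; [nra|]. assert (0 < (2 + c) ^ 2) by nra. nra. }
  assert (0 <= (/ (1 + c) - 4 / (2 + c) ^ 2) * (x - 0)) by nra.
  replace (2 * 0 / (2 + 0)) with 0 in Hc by (field; lra). lra.
Qed.

Lemma poly_core (a p u : R) : 0 < a -> 0 < p -> p ^ 2 / ((2 * a + p) * (a + p)) <= u ->
  (u + p / (a + p)) * (p ^ 3 * (p + 3 * a) ^ 2) <= 18 * u ^ 2 * ((p + 2 * a) * (p + a) ^ 4).
Proof.
  intros Ha Hp Hu.
  set (u0 := p ^ 2 / ((2 * a + p) * (a + p))) in *.
  set (Aq := (p + 2 * a) * (p + a) ^ 4). set (Bq := p ^ 3 * (p + 3 * a) ^ 2).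
  assert (Hu0 : 0 < u0) by (unfold u0; apply Rdiv_lt_0_compat; nra).
  assert (S1 : (u0 + p / (a + p)) * Bq <= 18 * u0 ^ 2 * Aq).
  { unfold u0, Aq, Bq.
    replace ((p ^ 2 / ((2 * a + p) * (a + p)) + p / (a + p)) * (p ^ 3 * (p + 3 * a) ^ 2))
      with (2 * p ^ 4 * (p + 3 * a) ^ 2 / (p + 2 * a)) by (field; lra).
    replace (18 * (p ^ 2 / ((2 * a + p) * (a + p))) ^ 2 * ((p + 2 * a) * (p + a) ^ 4))
      with (2 * p ^ 4 * (9 * (p + a) ^ 2) / (p + 2 * a)) by (field; lra).
    apply Rmult_le_compat_r; [left; apply Rinv_0_lt_compat; lra|].
    assert (0 < p ^ 4) by (apply pow_lt; lra).
    apply Rmult_le_compat_l; [lra|]. nra. }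
  assert (S2 : Bq <= 36 * u0 * Aq).
  { unfold u0, Aq, Bq.
    replace (36 * (p ^ 2 / ((2 * a + p) * (a + p))) * ((p + 2 * a) * (p + a) ^ 4))
      with (36 * p ^ 2 * (p + a) ^ 3) by (field; lra).
    assert (H9 : p * (p + 3 * a) ^ 2 <= 9 * (p + a) ^ 3).
    { assert (p * (p + 3 * a) ^ 2 <= 9 * p * (p + a) ^ 2) by nra.
      assert (9 * p * (p + a) ^ 2 <= 9 * (p + a) ^ 3) by nra. lra. }
    assert (0 < p ^ 2) by nra.
    assert (H10 : p ^ 2 * (p * (p + 3 * a) ^ 2) <= p ^ 2 * (9 * (p + a) ^ 3)) by (apply Rmult_le_compat_l; lra).
    assert (0 < (p + a) ^ 3) by (apply pow_lt; lra).
    assert (0 < p ^ 2 * (p + a) ^ 3) by (apply Rmult_lt_0_compat; lra).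
    replace (p ^ 3 * (p + 3 * a) ^ 2) with (p ^ 2 * (p * (p + 3 * a) ^ 2)) by ring.
    lra. }
  assert (HA : 0 < Aq) by (unfold Aq; assert (0 < (p + a) ^ 4) by (apply pow_lt; lra); nra).
  assert (Hdiff : 18 * u ^ 2 * Aq - (u + p / (a + p)) * Bq
     = (18 * u0 ^ 2 * Aq - (u0 + p / (a + p)) * Bq) + (u - u0) * (18 * Aq * (u + u0) - Bq)) by ring.
  assert (0 <= (u - u0) * (18 * Aq * (u + u0) - Bq)).
  { apply Rmult_le_pos; [lra|]. nra. }
  lra.
Qed.

Lemma dFm_nonneg A W c n0 p a : 0 < c -> 0 <= W -> 0 < n0 -> 0 < p -> 0 < a ->
  Fm A W c n0 p a < sqrt (2 * c) / 3 -> c < a * n0 * ln (1 + p / a) ->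
  0 <= dFm A W c n0 p a.
Proof.
  intros Hc HW Hn Hp Ha HF HN1.
  assert (HV := Vm_pos W n0 p a HW Hn Hp Ha).
  assert (HsV : 0 < sqrt (Vm W n0 p a)) by (apply sqrt_lt_R0; exact HV).
  assert (Hpa : 0 < p / a) by (apply Rdiv_lt_0_compat; lra).
  set (L := ln (1 + p / a)) in *.
  assert (HL : 2 * p / (2 * a + p) <= L).
  { unfold L. replace (2 * p / (2 * a + p)) with (2 * (p / a) / (2 + p / a)) by (field; lra).
    apply ln_lb; lra. }
  set (V := Vm W n0 p a) in *.
  set (sV := sqrt V) in *.
  set (D := A + a * n0 * L - c).
  set (V1 := n0 * a * p * (p + 2 * a) / (p + a) ^ 2).
  assert (HV1 : V1 <= V).
  { unfold V, Vm, V1.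
    replace (a * n0 * (p / a) * (p / a + 2) / (p / a + 1) ^ 2) with (n0 * a * p * (p + 2 * a) / (p + a) ^ 2)
      by (field; lra). lra. }
  assert (HV1p : 0 < V1).
  { unfold V1. apply Rdiv_lt_0_compat; [|apply pow_lt; lra].
    assert (0 < n0 * a) by nra. assert (0 < n0 * a * p) by nra. nra. }
  set (Np := n0 * (L - p / (a + p))).
  set (Vp := n0 * p ^ 2 * (p + 3 * a) / (p + a) ^ 3).
  assert (Hu : p ^ 2 / ((2 * a + p) * (a + p)) <= L - p / (a + p)).
  { replace (p ^ 2 / ((2 * a + p) * (a + p))) with (2 * p / (2 * a + p) - p / (a + p)) by (field; lra). lra. }
  assert (Hu0 : 0 < p ^ 2 / ((2 * a + p) * (a + p))) by (apply Rdiv_lt_0_compat; nra).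
  assert (HNp : 0 < Np) by (unfold Np; apply Rmult_lt_0_compat; lra).
  assert (HVp : 0 < Vp).
  { unfold Vp. apply Rdiv_lt_0_compat; [|apply pow_lt; lra].
    assert (0 < n0 * p ^ 2) by (apply Rmult_lt_0_compat; [lra|apply pow_lt; lra]). apply Rmult_lt_0_compat; lra. }
  assert (Hgoal : 0 <= Np * V - D * Vp / 2).
  { destruct (Rle_or_lt D 0) as [HD|HD].
    - assert (0 <= Np * V) by nra. assert (D * Vp <= 0) by nra. lra.
    -
      assert (HDs : D < sqrt (2 * c) / 3 * sV).
      { assert (HF' : D / sV < sqrt (2 * c) / 3) by exact HF.
        apply (Rmult_lt_reg_r (/ sV)); [apply Rinv_0_lt_compat; exact HsV|].
        rewrite Rmult_assoc, Rinv_r by lra. rewrite Rmult_1_r. exact HF'. }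
      assert (Hs3 : sqrt (2 * c) * sqrt (2 * c) = 2 * c) by (apply sqrt_sqrt; lra).
      assert (Hs3p : 0 <= sqrt (2 * c)) by apply sqrt_pos.
      assert (HsVV : sV * sV = V) by (apply sqrt_sqrt; lra).
      assert (HD2 : D * D < 2 * c / 9 * V).
      { assert (D * D < (sqrt (2 * c) / 3 * sV) * (sqrt (2 * c) / 3 * sV)) by nra.
        replace (2 * c / 9 * V) with ((sqrt (2 * c) / 3 * sV) * (sqrt (2 * c) / 3 * sV)); [lra|].
        replace (sqrt (2 * c) / 3 * sV * (sqrt (2 * c) / 3 * sV)) with
          ((sqrt (2 * c) * sqrt (2 * c)) * (sV * sV) / 9) by field.
        rewrite Hs3, HsVV. field. }
      assert (Hkey : L * (p ^ 3 * (p + 3 * a) ^ 2) <= 18 * (L - p / (a + p)) ^ 2 * ((p + 2 * a) * (p + a) ^ 4)).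
      { assert (H := poly_core a p (L - p / (a + p)) Ha Hp Hu).
        replace (L - p / (a + p) + p / (a + p)) with L in H by ring. exact H. }
      assert (Hid : 18 * Np ^ 2 * V1 - a * n0 * L * Vp ^ 2 =
         n0 ^ 3 * a * p / (p + a) ^ 6 *
         (18 * (L - p / (a + p)) ^ 2 * ((p + 2 * a) * (p + a) ^ 4) - L * (p ^ 3 * (p + 3 * a) ^ 2))).
      { unfold Np, V1, Vp. field. lra. }
      assert (Hcoef : 0 < n0 ^ 3 * a * p / (p + a) ^ 6).
      { apply Rdiv_lt_0_compat; [|apply pow_lt; lra].
        assert (0 < n0 ^ 3) by (apply pow_lt; lra).
        assert (0 < n0 ^ 3 * a) by (apply Rmult_lt_0_compat; lra).
        apply Rmult_lt_0_compat; lra. }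
      assert (H18 : a * n0 * L * Vp ^ 2 <= 18 * Np ^ 2 * V1).
      { assert (0 <= n0 ^ 3 * a * p / (p + a) ^ 6 *
         (18 * (L - p / (a + p)) ^ 2 * ((p + 2 * a) * (p + a) ^ 4) - L * (p ^ 3 * (p + 3 * a) ^ 2))).
        { apply Rmult_le_pos; lra. }
        lra. }
      assert (HVp2 : 0 < Vp ^ 2) by (apply pow_lt; lra).
      assert (HNp2 : 0 < Np ^ 2) by (apply pow_lt; lra).
      assert (Hsq : (D * Vp) * (D * Vp) < (2 * Np * V) * (2 * Np * V)).
      { assert (E1 : (D * Vp) * (D * Vp) = (D * D) * Vp ^ 2) by ring.
        assert (E2 : (D * D) * Vp ^ 2 < (2 * c / 9 * V) * Vp ^ 2) by (apply Rmult_lt_compat_r; lra).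
        assert (E3 : (2 * c / 9 * V) * Vp ^ 2 <= (2 / 9 * V) * (a * n0 * L * Vp ^ 2)).
        { replace ((2 * c / 9 * V) * Vp ^ 2) with ((2 / 9 * V) * (c * Vp ^ 2)) by field.
          apply Rmult_le_compat_l; [lra|]. apply Rmult_le_compat_r; lra. }
        assert (E4 : (2 / 9 * V) * (a * n0 * L * Vp ^ 2) <= (2 / 9 * V) * (18 * Np ^ 2 * V1))
          by (apply Rmult_le_compat_l; lra).
        assert (E5 : (2 / 9 * V) * (18 * Np ^ 2 * V1) <= (2 * Np * V) * (2 * Np * V)).
        { replace ((2 / 9 * V) * (18 * Np ^ 2 * V1)) with (4 * Np ^ 2 * V * V1) by field.
          replace ((2 * Np * V) * (2 * Np * V)) with (4 * Np ^ 2 * V * V) by ring.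
          assert (0 < 4 * Np ^ 2 * V) by (apply Rmult_lt_0_compat; lra).
          apply Rmult_le_compat_l; lra. }
        lra. }
      assert (0 < D * Vp) by (apply Rmult_lt_0_compat; lra).
      assert (0 < 2 * Np * V) by (apply Rmult_lt_0_compat; lra).
      assert (D * Vp < 2 * Np * V) by nra.
      lra. }
  change (0 <= (Np * V - D * Vp / 2) / (V * sV)).
  apply Rdiv_le_0_compat; [exact Hgoal|]. apply Rmult_lt_0_compat; lra.
Qed.

Lemma Fm_mono A W c n0 p a1 a2 : 0 < c -> 0 <= W -> 0 < n0 -> 0 < p -> 0 < a1 -> a1 <= a2 ->
  (forall a, a1 <= a <= a2 -> Fm A W c n0 p a < sqrt (2 * c) / 3 /\ c < a * n0 * ln (1 + p / a)) ->
  Fm A W c n0 p a1 <= Fm A W c n0 p a2.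
Proof.
  intros Hc HW Hn Hp Ha1 H12 H.
  destruct H12 as [H12|H12]; [|subst; lra].
  assert (Hd : forall x, a1 <= x <= a2 -> derivable_pt_lim (Fm A W c n0 p) x (dFm A W c n0 p x)).
  { intros x Hx. apply is_derive_Reals. apply Fm_deriv; lra. }
  destruct (MVT_cor2 _ _ a1 a2 H12 Hd) as [x [Hx1 Hx2]].
  assert (Hx := H x ltac:(lra)). destruct Hx as [Hx3 Hx4].
  assert (0 <= dFm A W c n0 p x) by (apply dFm_nonneg; try lra; tauto).
  assert (0 <= dFm A W c n0 p x * (a2 - a1)) by (apply Rmult_le_pos; lra).
  lra.
Qed.

Lemma sumR_split m f g : (1 <= m)%nat -> (forall i, (1 <= i)%nat -> f i = g i) ->
  sumR m f = sumR m g - g 0%nat + f 0%nat.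
Proof.
  intros Hm Hfg. induction m as [|k IH]; [lia|].
  destruct k as [|k].
  - simpl. ring.
  - change (sumR (S (S k)) f) with (sumR (S k) f + f (S k)).
    change (sumR (S (S k)) g) with (sumR (S k) g + g (S k)).
    rewrite IH by lia. rewrite (Hfg (S k)) by lia. ring.
Qed.

Lemma sumR_rest_nonneg m g : (1 <= m)%nat -> (forall i, (1 <= i)%nat -> (i < m)%nat -> 0 <= g i) ->
  0 <= sumR m g - g 0%nat.
Proof.
  intros Hm Hg. induction m as [|k IH]; [lia|].
  destruct k as [|k].
  - simpl. lra.
  - change (sumR (S (S k)) g) with (sumR (S k) g + g (S k)).
    assert (0 <= sumR (S k) g - g 0%nat) by (apply IH; [lia|intros; apply Hg; lia]).
    assert (0 <= g (S k)) by (apply Hg; lia). lra.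
Qed.

End CQ.
Import CQ.

Lemma scaleN0 a n : scaleN a n 0%nat = a * n 0%nat.
Proof. reflexivity. Qed.
Lemma scaleP0 a P : scaleP a P 0%nat = P 0%nat / a.
Proof. reflexivity. Qed.
Lemma scaleNS a n i : (1 <= i)%nat -> scaleN a n i = n i.
Proof. intros H. unfold scaleN. destruct i; [lia|reflexivity]. Qed.
Lemma scalePS a P i : (1 <= i)%nat -> scaleP a P i = P i.
Proof. intros H. unfold scaleP. destruct i; [lia|reflexivity]. Qed.

Lemma eps_form B m n P a : (1 <= m)%nat ->
  epsm B m (scaleN a n) (scaleP a P) =
  Qfun (Fm (sumR m (fun i => n i * ln (1 + P i)) - n 0%nat * ln (1 + P 0%nat))
           (sumR m (fun i => n i * P i * (P i + 2) / (P i + 1) ^ 2) - n 0%nat * P 0%nat * (P 0%nat + 2) / (P 0%nat + 1) ^ 2)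
           (B * ln 2) (n 0%nat) (P 0%nat) a).
Proof.
  intros Hm. unfold epsm, Fm.
  rewrite (sumR_split m (fun i => scaleN a n i * ln (1 + scaleP a P i)) (fun i => n i * ln (1 + P i))) by
    (first [exact Hm | intros i Hi; rewrite scaleNS, scalePS by exact Hi; reflexivity]).
  rewrite (sumR_split m (fun i => scaleN a n i * scaleP a P i * (scaleP a P i + 2) / (scaleP a P i + 1) ^ 2) (fun i => n i * P i * (P i + 2) / (P i + 1) ^ 2)) by
    (first [exact Hm | intros i Hi; rewrite scaleNS, scalePS by exact Hi; reflexivity]).
  rewrite !scaleN0, !scaleP0. reflexivity.
Qed.

Theorem lemma3 (B : R) (HB : 0 < B) (M : nat) (HM : (2 <= M)%nat)
  (n P : nat -> R) (Hpos : forall i, (i < M)%nat -> 0 < n i /\ 0 < P i)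
  (a1 a2 : R) (Ha1 : 0 < a1) (Ha12 : a1 <= a2)
  (Hin : forall a, a1 <= a <= a2 -> inBset B M (scaleN a n) (scaleP a P)) :
  epsm B 1 (scaleN a2 n) (scaleP a2 P) <= epsm B 1 (scaleN a1 n) (scaleP a1 P) /\
  epsm B M (scaleN a2 n) (scaleP a2 P) <= epsm B M (scaleN a1 n) (scaleP a1 P).
Proof.
  assert (Hln2 : 0 < ln 2) by (rewrite <- ln_1; apply ln_increasing; lra).
  set (c := B * ln 2).
  assert (Hc : 0 < c) by (unfold c; apply Rmult_lt_0_compat; lra).
  destruct (Hpos 0%nat ltac:(lia)) as [Hn0 Hp0].
  set (A1 := sumR 1 (fun i => n i * ln (1 + P i)) - n 0%nat * ln (1 + P 0%nat)).
  set (W1 := sumR 1 (fun i => n i * P i * (P i + 2) / (P i + 1) ^ 2) - n 0%nat * P 0%nat * (P 0%nat + 2) / (P 0%nat + 1) ^ 2).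
  set (AM := sumR M (fun i => n i * ln (1 + P i)) - n 0%nat * ln (1 + P 0%nat)).
  set (WM := sumR M (fun i => n i * P i * (P i + 2) / (P i + 1) ^ 2) - n 0%nat * P 0%nat * (P 0%nat + 2) / (P 0%nat + 1) ^ 2).
  assert (HA1 : A1 = 0) by (unfold A1; simpl; ring).
  assert (HW1 : W1 = 0) by (unfold W1; simpl; field; lra).
  assert (HWM : 0 <= WM).
  { unfold WM. apply (sumR_rest_nonneg M (fun i => n i * P i * (P i + 2) / (P i + 1) ^ 2)); [lia|].
    intros i Hi1 HiM. destruct (Hpos i HiM) as [Hni HPi].
    unfold Rdiv. apply Rmult_le_pos; [|left; apply Rinv_0_lt_compat, pow_lt; lra].
    assert (0 < n i * P i) by (apply Rmult_lt_0_compat; lra).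
    apply Rmult_le_pos; lra. }
  assert (E1 : forall a, epsm B 1 (scaleN a n) (scaleP a P) = Qfun (Fm A1 W1 c (n 0%nat) (P 0%nat) a))
    by (intros; apply eps_form; lia).
  assert (EM : forall a, epsm B M (scaleN a n) (scaleP a P) = Qfun (Fm AM WM c (n 0%nat) (P 0%nat) a))
    by (intros; apply eps_form; lia).
  set (s3 := sqrt (2 * c) / 3).
  assert (Hs3 : Qfun (sqrt (2 * B * ln 2) / 3) = Qfun s3).
  { unfold s3, c. f_equal. f_equal. f_equal. ring. }
  assert (Hcond : forall a, a1 <= a <= a2 ->
     Fm A1 W1 c (n 0%nat) (P 0%nat) a < s3 /\ Fm AM WM c (n 0%nat) (P 0%nat) a < s3 /\
     c < a * n 0%nat * ln (1 + P 0%nat / a)).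
  { intros a Ha. destruct (Hin a Ha) as [_ [Hh1 [Hh2 Hh3]]].
    rewrite E1, EM in *. rewrite Hs3 in Hh3.
    assert (HFM : Fm AM WM c (n 0%nat) (P 0%nat) a < s3).
    { destruct (Rlt_or_le (Fm AM WM c (n 0%nat) (P 0%nat) a) s3) as [H|H]; [exact H|].
      assert (H' := Q_mono _ _ H). lra. }
    assert (HF1 : Fm A1 W1 c (n 0%nat) (P 0%nat) a < s3).
    { destruct (Rlt_or_le (Fm A1 W1 c (n 0%nat) (P 0%nat) a) s3) as [H|H]; [exact H|].
      assert (H' := Q_mono _ _ H). lra. }
    assert (HF0 : 0 < Fm A1 W1 c (n 0%nat) (P 0%nat) a).
    { destruct (Rlt_or_le 0 (Fm A1 W1 c (n 0%nat) (P 0%nat) a)) as [H|H]; [exact H|].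
      assert (H' := Q_mono _ _ H). rewrite Q0 in H'. lra. }
    split; [exact HF1|]. split; [exact HFM|].
    unfold Fm in HF0. rewrite HA1 in HF0.
    assert (HV := Vm_pos W1 (n 0%nat) (P 0%nat) a ltac:(lra) Hn0 Hp0 ltac:(lra)).
    unfold Vm in HV.
    assert (Hs : 0 < sqrt (W1 + a * n 0%nat * (P 0%nat / a) * (P 0%nat / a + 2) / (P 0%nat / a + 1) ^ 2))
      by (apply sqrt_lt_R0; exact HV).
    set (sq := sqrt (W1 + a * n 0%nat * (P 0%nat / a) * (P 0%nat / a + 2) / (P 0%nat / a + 1) ^ 2)) in *.
    assert (0 < (0 + a * n 0%nat * ln (1 + P 0%nat / a) - c) / sq * sq) by (apply Rmult_lt_0_compat; lra).
    replace ((0 + a * n 0%nat * ln (1 + P 0%nat / a) - c) / sq * sq)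
      with (0 + a * n 0%nat * ln (1 + P 0%nat / a) - c) in H by (field; lra).
    lra. }
  rewrite !E1, !EM. split.
  - apply Q_mono. apply Fm_mono; try lra.
    intros a Ha. destruct (Hcond a Ha) as [H1 [H2 H3]]. split; [exact H1|exact H3].
  - apply Q_mono. apply Fm_mono; try lra.
    intros a Ha. destruct (Hcond a Ha) as [H1 [H2 H3]]. split; [exact H2|exact H3].
Qed.
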